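(* Let $n \geq 2$, $k \geq 1$, $M_1, \dots, M_k \in \mathrm{GL}_n(\mathbb{R})$, $\mathbf g_1, \dots, \mathbf g_k \in \mathbb{R}^n$, $G_i := M_i \cdot \mathbb{Z}^n + \mathbf g_i$ for $1 \le i \le k$, and $F := \bigcup_{i=1}^k G_i$. Let $\mathbf b \in \mathbb{S}^{n-1}$. The following are equivalent. \begin{enumerate} \item $\phi_\varepsilon[F](\mathbf x, \mathbf b)$ is well defined for all $\varepsilon > 0$ and all $\mathbf x \in \mathbb{R}^n$. \item There is an index $i \in \{1, \dots, k\}$ such that $\phi_\varepsilon[G_i](\mathbf x, \mathbf b)$ is well defined for all $\varepsilon > 0$ and all $\mathbf x \in \mathbb{R}^n$. \item At least one of the vectors $M_1^{-1}\mathbf b, \dots, M_k^{-1}\mathbf b$ has rationally independent components. \end{enumerate}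
   Context: For $\mathbf a \in \mathbb{R}^n$, $\mathbf b \in \mathbb{S}^{n-1}$, $l > 0$, let $L(\mathbf a, \mathbf b, l) := \{\mathbf a + \lambda \mathbf b : -l \le \lambda \le l\}$. For $S \subset \mathbb{R}^n$ and $\varepsilon > 0$, the directional visibility function is \[ \phi_\varepsilon[S](\mathbf a, \mathbf b) := \inf\Big\{ l > 0 : L(\mathbf a, \mathbf b, l) \cap \bigcup_{\mathbf s \in S} B_2(\mathbf s, \varepsilon) \neq \varnothing \Big\}, \] where $B_2(\mathbf s,\varepsilon)$ is the open Euclidean ball; it is called well defined at $(\mathbf a, \mathbf b)$ when the set over which the infimum is taken is nonempty. A vector $\mathbf v \in \mathbb{R}^n$ has rationally independent components if there is no $\mathbf q \in \mathbb{Z}^n \setminus \{\mathbf 0\}$ with $\mathbf q \cdot \mathbf v = 0$. *)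

(* Defs.v *)
From mathcomp Require Import all_boot all_order all_algebra.
From mathcomp Require Import reals.
Set Implicit Arguments. Unset Strict Implicit. Unset Printing Implicit Defensive.
Import Order.TTheory GRing.Theory Num.Theory.
Local Open Scope ring_scope.

Section Defs.
Variables (R : realType) (n : nat).

Definition dotv (u v : 'cV[R]_n) : R := \sum_(i < n) u i 0 * v i 0.

Definition norm2 (v : 'cV[R]_n) : R := Num.sqrt (dotv v v).

Definition in_sphere (b : 'cV[R]_n) : Prop := norm2 b = 1.

Definition segment (a b : 'cV[R]_n) (l : R) : 'cV[R]_n -> Prop :=
  fun y => exists lam : R, -l <= lam /\ lam <= l /\ y = a + lam *: b.

Definition ball2 (s : 'cV[R]_n) (eps : R) : 'cV[R]_n -> Prop :=
  fun y => norm2 (y - s) < eps.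

Definition thick (S : 'cV[R]_n -> Prop) (eps : R) : 'cV[R]_n -> Prop :=
  fun y => exists s, S s /\ ball2 s eps y.

(* the set over which the infimum defining phi_eps[S](a,b) is taken *)
Definition vis_set (eps : R) (S : 'cV[R]_n -> Prop) (a b : 'cV[R]_n) : R -> Prop :=
  fun l => 0 < l /\ exists y, segment a b l y /\ thick S eps y.

(* phi_eps[S](a,b) is well defined: the above set is nonempty *)
Definition vis_well_defined (eps : R) (S : 'cV[R]_n -> Prop) (a b : 'cV[R]_n) : Prop :=
  exists l, vis_set eps S a b l.

Definition shifted_lattice (M : 'M[R]_n) (g : 'cV[R]_n) : 'cV[R]_n -> Prop :=
  fun x => exists z : 'cV[int]_n, x = M *m map_mx (fun m : int => m%:~R) z + g.

Definition rat_indep (v : 'cV[R]_n) : Prop :=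
  ~ exists q : 'cV[int]_n, q != 0 /\ \sum_(i < n) (q i 0)%:~R * v i 0 = 0.

End Defs.

(* Main.v *)
Require Import Defs.
From mathcomp Require Import all_boot all_order all_algebra.
From mathcomp Require Import reals.
From mathcomp Require Import trigo complex.
From mathcomp Require Import ring lra zify.
From Stdlib Require Import Classical ClassicalEpsilon.
Import Order.TTheory GRing.Theory Num.Theory.
Local Open Scope ring_scope.
Set Implicit Arguments. Unset Strict Implicit. Unset Printing Implicit Defensive.

Lemma nat_ineq a n : (0 < a)%N ->
  (2 * (a * (2 * a ^ n).+1).+1 ^ n < 2 ^ (n.+1 * (2 * a ^ n).+1))%N.
Proof.
move=> a0; set q := (2 * a ^ n).+1.
have hq : (q < 2 ^ q)%N by apply: ltn_expl.
have h1 : ((a * q).+1 <= a * 2 ^ q)%N.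
  apply: (@leq_trans (a * q.+1)); first by rewrite mulnS; lia.
  by rewrite leq_mul2l hq orbT.
have h2 : ((a * q).+1 ^ n <= a ^ n * 2 ^ (q * n))%N.
  rewrite expnM -expnMn; case: (n) => [|k]; first by rewrite !expn0.
  by rewrite leq_exp2r.
have h3 : (2 * a ^ n < 2 ^ q)%N by apply: leq_trans hq.
have -> : (n.+1 * q = q + q * n)%N by rewrite mulSn [(n * q)%N]mulnC.
rewrite expnD.
apply: (@leq_ltn_trans (2 * (a ^ n * 2 ^ (q * n)))).
  by rewrite leq_mul2l h2 orbT.
rewrite mulnA ltn_pmul2r ?expn_gt0 //.
Qed.

Section Kron.
Variable R : realType.
Implicit Types x y : R.
Local Notation C := (Rcomplex R).
Local Notation nc := (@Normc.normc R).

Definition ee x : C := (cos (pi *+ 2 * x) +i* sin (pi *+ 2 * x))%C.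

Lemma ee0 : ee 0 = 1.
Proof. by rewrite /ee mulr0 cos0 sin0. Qed.

Lemma eeD x y : ee (x + y) = ee x * ee y.
Proof.
rewrite /ee mulrDr cosD sinD /=; congr Complex.
by rewrite addrC.
Qed.

Lemma eeMn x m : ee (x *+ m) = ee x ^+ m.
Proof.
elim: m => [|m IH]; first by rewrite mulr0n ee0 expr0.
by rewrite mulrS eeD IH exprS.
Qed.

Lemma nc_ee x : nc (ee x) = 1.
Proof. by rewrite /ee /Normc.normc cos2Dsin2 sqrtr1. Qed.

Lemma nc_ge0 (z : C) : 0 <= nc z.
Proof. by case: z => a b; rewrite /Normc.normc sqrtr_ge0. Qed.

Lemma nc_sum (I : finType) (P : pred I) (F : I -> C) :
  nc (\sum_(i | P i) F i) <= \sum_(i | P i) nc (F i).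
Proof.
elim/big_rec2: _ => [|i y1 y2 _ IH]; first by rewrite Normc.normc0.
by apply: le_trans (le_normcD _ _) _; rewrite lerD2l.
Qed.

Lemma nc_exp (z : C) m : nc (z ^+ m) = nc z ^+ m.
Proof.
elim: m => [|m IH]; first by rewrite !expr0 Normc.normc1.
by rewrite !exprS Normc.normcM IH.
Qed.


Lemma geo_bound (w : C) N : nc w = 1 -> w != 1 ->
  nc (\sum_(m < N) w ^+ m) <= 2 / nc (1 - w).
Proof.
move=> w1 wn1.
have hpos : 0 < nc (1 - w).
  rewrite lt_def nc_ge0 andbT; apply/eqP => /Normc.eq0_normc /eqP.
  by rewrite subr_eq0 eq_sym (negbTE wn1).
rewrite ler_pdivlMr //.
have -> : nc (\sum_(m < N) w ^+ m) * nc (1 - w) = nc (w ^+ N - 1).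
  by rewrite subrX1 Normc.normcM mulrC -normcN opprB.
apply: le_trans (le_normcD _ _) _.
by rewrite normcN nc_exp w1 expr1n Normc.normc1.
Qed.


Lemma ee_neq1 x : x != 0 -> `|x| < 1/2 -> ee x != 1.
Proof.
move=> x0 xh; apply/negP => /eqP H.
have Hs : sin (pi *+ 2 * x) = 0 by move: H => /(congr1 (fun z : C => complex.Im z)).
have pi0 := pi_gt0 R.
have key : forall z : R, 0 < z -> z < 1/2 -> 0 < sin (pi *+ 2 * z).
  move=> z z0 zh; apply: sin_gt0_pi; apply/andP; split.
    by rewrite mulr_gt0 // pmulrn_rgt0.
  rewrite -mulr_natl -mulrA -[ltRHS]mulr1 mulrCA ltr_pM2l //.
  lra.
case: (ltgtP x 0) => hx.
- have h1 : 0 < - x by rewrite oppr_gt0.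
  have h2 : - x < 1/2 by rewrite -(ltr0_norm hx).
  by have := key _ h1 h2; rewrite mulrN sinN Hs oppr0 ltxx.
- have h2 : x < 1/2 by rewrite -(gtr0_norm hx).
  by have := key _ hx h2; rewrite Hs ltxx.
- by rewrite hx eqxx in x0.
Qed.

Lemma cos_period x (z : int) : cos (pi *+ 2 * (x - z%:~R)) = cos (pi *+ 2 * x).
Proof.
case: z => k.
  have -> : (Posz k)%:~R = k%:R :> R by [].
  rewrite -(periodicn (@cosD2pi R) k (pi *+ 2 * (x - k%:R))).
  by congr cos; rewrite -mulr_natr; ring.
rewrite NegzE intrN opprK.
have -> : (Posz k.+1)%:~R = k.+1%:R :> R by [].
rewrite -(periodicn (@cosD2pi R) k.+1 (pi *+ 2 * x)).
by congr cos; rewrite -mulr_natr; ring.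
Qed.

Lemma near_int (x e : R) : 0 < e -> e <= 1/2 ->
  cos (pi *+ 2 * e) < cos (pi *+ 2 * x) ->
  `|x - (Num.floor (x + 1/2))%:~R| < e.
Proof.
move=> e0 e1 H.
have := floor_itv (x + 1/2); rewrite intrD.
have := cos_period x (Num.floor (x + 1/2)).
set z := (Num.floor (x + 1/2))%:~R => hper /andP [h1 h2].
have pi0 := pi_gt0 R.
have hx : `|x - z| <= 1/2.
  rewrite ler_norml; apply/andP; split; lra.
have p2 : 0 < (pi : R) *+ 2 by rewrite mulr2n; lra.
have E : cos (pi *+ 2 * `|x - z|) = cos (pi *+ 2 * x).
  by rewrite -hper -[in RHS]cos_norm normrM (ger0_norm (ltW p2)).
rewrite -E in H; move: H.
rewrite ltr_cos ?in_itv /=.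
- by rewrite ltr_pM2l.
- have w0 : 0 <= `|x - z| by [].
  move: w0 hx; set w := `|x - z| => w0 hx.
  apply/andP; split; rewrite mulr2n mulrDl; nra.
- apply/andP; split; rewrite mulr2n mulrDl; nra.
Qed.

Section Bohr.
Variables (n : nat) (v y : 'I_n -> R).
Hypothesis hv : forall q : 'I_n -> int,
  \sum_(j < n) (q j)%:~R * v j = 0 -> forall j, q j = 0.

Definition wv (k : 'I_n.+1) : R := \sum_(j < n) (k == lift ord0 j)%:R * v j.
Definition yv (k : 'I_n.+1) : R := \sum_(j < n) (k == lift ord0 j)%:R * y j.
Definition FF (t : R) : C := \sum_(k < n.+1) ee (t * wv k - yv k).

Section P.
Variable p : nat.
Local Notation S := {ffun 'I_p -> 'I_n.+1}.
Definition cnt (s : S) (j : 'I_n) : nat := \sum_(i < p) (s i == lift ord0 j).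
Definition lam (s : S) : R := \sum_(i < p) wv (s i).
Definition phs (s : S) : R := \sum_(i < p) yv (s i).

Lemma sum_cnt (u : 'I_n -> R) (s : S) :
  \sum_(i < p) \sum_(j < n) (s i == lift ord0 j)%:R * u j
  = \sum_(j < n) (cnt s j)%:R * u j.
Proof.
rewrite exchange_big; apply: eq_bigr => j _.
by rewrite /cnt natr_sum mulr_suml.
Qed.

Lemma lamE s : lam s = \sum_(j < n) (cnt s j)%:R * v j.
Proof. exact: sum_cnt. Qed.
Lemma phsE s : phs s = \sum_(j < n) (cnt s j)%:R * y j.
Proof. exact: sum_cnt. Qed.

Lemma FFpow t : FF t ^+ p = \sum_(s : S) ee (t * lam s - phs s).
Proof.
rewrite -[in LHS](card_ord p) -prodr_const /FF.
rewrite bigA_distr_bigA /=; apply: eq_bigr => s _.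
by rewrite /lam /phs mulr_sumr -sumrB (big_morph _ eeD ee0).
Qed.

Definition cntf (s : S) : {ffun 'I_n -> 'I_p.+1} := [ffun j => inord (cnt s j)].

Lemma cnt_le s j : (cnt s j <= p)%N.
Proof.
rewrite /cnt; apply: (@leq_trans (\sum_(i < p) 1)%N).
  by apply: leq_sum => i _; exact: leq_b1.
by rewrite sum1_card card_ord.
Qed.

Lemma cntfP s s0 : cntf s = cntf s0 -> forall j, cnt s j = cnt s0 j.
Proof.
move=> /ffunP H j; have := H j; rewrite !ffunE => /(congr1 (@nat_of_ord _)).
by rewrite !inordK // ltnS cnt_le.
Qed.

Lemma good_eq s s0 : cntf s = cntf s0 -> lam s = lam s0 /\ phs s = phs s0.
Proof.
move=> /cntfP H; rewrite !lamE !phsE.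
by split; apply: eq_bigr => j _; rewrite H.
Qed.

Lemma bad_neq s s0 : cntf s != cntf s0 -> lam s != lam s0.
Proof.
apply: contraNN => /eqP H; apply/eqP/ffunP => j; rewrite !ffunE; congr inord.
have hq : \sum_(j0 < n) ((cnt s j0)%:Z - (cnt s0 j0)%:Z)%:~R * v j0 = 0.
  rewrite (eq_bigr (fun j => (cnt s j)%:R * v j - (cnt s0 j)%:R * v j)).
    by rewrite sumrB -!lamE H subrr.
  by move=> i _; rewrite intrD intrN !pmulrn mulrBl.
have := hv (q := fun j => (cnt s j)%:Z - (cnt s0 j)%:Z) hq j.
by move/eqP; rewrite subr_eq0 => /eqP [].
Qed.

Definition V1 : R := \sum_(j < n) `|v j|.

Lemma V1_ge0 : 0 <= V1.
Proof. by apply: sumr_ge0 => j _. Qed.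

Lemma wv_bound k : `|wv k| <= V1.
Proof.
apply: le_trans; first exact: ler_norm_sum.
apply: ler_sum => j _.
rewrite normrM ler_piMl //; case: (_ == _) => /=; by rewrite ?normr1 ?normr0.
Qed.

Lemma lam_bound s : `|lam s| <= p%:R * V1.
Proof.
apply: le_trans; first exact: ler_norm_sum.
apply: le_trans; first by apply: ler_sum => i _; exact: wv_bound.
by rewrite sumr_const card_ord mulr_natl.
Qed.

Definition tau : R := ((p%:R * V1) *+ 4 + 1)^-1.

Lemma tau_gt0 : 0 < tau.
Proof.
rewrite /tau invr_gt0; have := V1_ge0; have : 0 <= p%:R :> R by [].
move=> h1 h2; have : 0 <= p%:R * V1 by rewrite mulr_ge0.
lra.
Qed.

Lemma tau_small s s0 : `|tau * (lam s - lam s0)| < 1/2.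
Proof.
have hb : `|lam s - lam s0| <= (p%:R * V1) *+ 2.
  apply: le_trans (ler_normB _ _) _; rewrite mulr2n lerD ?lam_bound //.
have h0 : 0 <= p%:R * V1 by rewrite mulr_ge0 ?V1_ge0.
rewrite normrM (gtr0_norm tau_gt0) /tau mulrC ltr_pdivrMr; last lra.
set a := p%:R * V1 in hb h0 *; lra.
Qed.

Definition om s s0 : C := ee (tau * (lam s - lam s0)).

Lemma T_eq s0 N :
  \sum_(m < N) FF (m%:R * tau) ^+ p * ee (phs s0 - m%:R * tau * lam s0)
  = \sum_(s : S) ee (phs s0 - phs s) * \sum_(m < N) om s s0 ^+ m.
Proof.
under eq_bigr => m _ do rewrite FFpow mulr_suml.
rewrite exchange_big; apply: eq_bigr => s _; rewrite mulr_sumr.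
apply: eq_bigr => m _; rewrite /om -eeD -eeMn -eeD; congr ee.
rewrite -mulr_natl; ring.
Qed.

Lemma nc_natr (N : nat) : nc (N%:R : C) = N%:R.
Proof. by rewrite normcMn Normc.normc1. Qed.

Lemma fiber_bound (A : R) : 0 <= A -> (forall t, nc (FF t) <= A) ->
  forall s0 : S, (#|[pred s : S | cntf s == cntf s0]|%:R : R) <= A ^+ p + 1.
Proof.
move=> A0 hA s0.
set K := #|_|.
set E := \sum_(s : S | cntf s != cntf s0) 2 / nc (1 - om s s0).
have E0 : 0 <= E by apply: sumr_ge0 => s _; rewrite divr_ge0 ?nc_ge0.
set N := Num.Def.archi_bound E.
have EN : E < N%:R by apply: archi_boundP.
have N0 : 0 < N%:R :> R by apply: le_lt_trans EN.
set T := \sum_(m < N) FF (m%:R * tau) ^+ p * ee (phs s0 - m%:R * tau * lam s0).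
have Tup : nc T <= N%:R * A ^+ p.
  apply: le_trans; first exact: nc_sum.
  apply: le_trans; first apply: (@ler_sum _ _ _ _ _ (fun _ => A ^+ p)).
    move=> m _; rewrite Normc.normcM nc_ee mulr1 nc_exp.
    by apply: lerXn2r; rewrite ?nnegrE ?nc_ge0 ?hA.
  by rewrite sumr_const card_ord mulr_natl.
have Tlow : K%:R * N%:R - E <= nc T.
  rewrite /T T_eq (bigID (fun s => cntf s == cntf s0)) /=.
  set G := \sum_(i | _) _; set B := \sum_(i | _) _.
  have hG : G = (N%:R : C) *+ K.
    rewrite /G -sumr_const; apply: eq_bigr => s /eqP hs.
    have [h1 h2] := good_eq hs.
    rewrite /om h1 h2 !subrr mulr0 ee0 mul1r.
    by under eq_bigr do rewrite expr1n; rewrite sumr_const card_ord.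
  have hB : nc B <= E.
    apply: le_trans; first exact: nc_sum.
    apply: ler_sum => s hs; rewrite Normc.normcM nc_ee mul1r.
    apply: geo_bound; first exact: nc_ee.
    apply: ee_neq1; last exact: tau_small.
    by rewrite mulf_neq0 ?(gt_eqF tau_gt0) // subr_eq0 bad_neq.
  have : nc G <= nc (G + B) + nc B.
    by rewrite -{1}(addrK B G); apply: le_trans (le_normcD _ _) _; rewrite normcN.
  rewrite hG normcMn nc_natr.
  have e : (N%:R *+ K : R) = K%:R * N%:R by rewrite mulr_natl.
  by rewrite e => h; rewrite lerBlDr; apply: (le_trans h); rewrite lerD2l.
have : K%:R * N%:R <= N%:R * A ^+ p + E by rewrite -lerBlDr; apply: le_trans Tup.
move=> h; have h2 : K%:R * N%:R < (A ^+ p + 1) * N%:R.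
  by apply: le_lt_trans h _; rewrite mulrDl mul1r mulrC ltrD2l.
by apply: ltW; rewrite -(ltr_pM2r N0).
Qed.

Lemma count_bound (B : R) : 0 <= B ->
  (forall s0 : S, (#|[pred s : S | cntf s == cntf s0]|%:R : R) <= B) ->
  ((n.+1 ^ p)%N%:R : R) <= ((p.+1 ^ n)%N)%:R * B.
Proof.
move=> B0 hB.
have -> : (n.+1 ^ p)%N = #|S| by rewrite card_ffun !card_ord.
have -> : (#|S|%:R : R) = \sum_(s : S) 1 by rewrite sumr_const.
rewrite (partition_big cntf predT) //=.
have -> : ((p.+1 ^ n)%N%:R : R) * B = \sum_(c : {ffun 'I_n -> 'I_p.+1}) B.
  by rewrite sumr_const card_ffun !card_ord mulr_natl.
apply: ler_sum => c _; rewrite sumr_const.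
case: (pickP (fun s : S => cntf s == c)) => [s0 /eqP <- | none].
  by apply: le_trans (hB s0); rewrite le_eqVlt; apply/orP; left.
rewrite (@eq_card0 _ _) //; move=> s; rewrite !inE /=; exact: none.
Qed.

End P.

Lemma bernoulli (h : R) a : 0 <= h -> 1 + a%:R * h <= (1 + h) ^+ a.
Proof.
move=> h0; elim: a => [|a IH]; first by rewrite mul0r addr0 expr0.
rewrite exprS; apply: le_trans (_ : (1 + h) * (1 + a%:R * h) <= _).
  rewrite mulrDr mulr1 mulrDl mul1r -natr1 mulrDl mul1r.
  have : 0 <= h * (a%:R * h) by rewrite !mulr_ge0.
  lra.
by rewrite ler_pM2l //; lra.
Qed.

Lemma FF_big (eta : R) : (0 < n)%N -> 0 < eta -> eta <= 1 ->
  exists t, n.+1%:R - eta < nc (FF t).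
Proof.
move=> n0 e0 e1.
case: (classic (exists t, n.+1%:R - eta < nc (FF t))) => // Hn; exfalso.
set A := n.+1%:R - eta.
have hA : forall t, nc (FF t) <= A.
  by move=> t; rewrite leNgt; apply/negP => h; apply: Hn; exists t.
have A1 : 1 <= A.
  rewrite /A; have : (2 : R) <= n.+1%:R by rewrite ler_nat ltnS.
  lra.
have A0 : 0 < A by lra.
have Hp : forall p, ((n.+1 ^ p)%N%:R : R) <= ((p.+1 ^ n)%N)%:R * (A ^+ p + 1).
  move=> p; apply: count_bound.
    by rewrite addr_ge0 // exprn_ge0 // ltW.
  by move=> s0; apply: fiber_bound => //; rewrite ltW.
set h := eta / A.
have h0 : 0 < h by rewrite divr_gt0.
set a := Num.Def.archi_bound (2 ^+ n.+1 / h).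
have ha : 2 ^+ n.+1 < a%:R * h.
  rewrite -ltr_pdivrMr //; apply: archi_boundP.
  by rewrite divr_ge0 ?exprn_ge0 // ltW.
have a0 : (0 < a)%N.
  rewrite lt0n; apply/negP => /eqP a0; move: ha; rewrite a0 mul0r.
  by rewrite ltNge exprn_ge0.
set q := (2 * a ^ n).+1.
set p := (a * q)%N.
have en : (n.+1%:R : R) = A * (1 + h).
  rewrite /h mulrDr mulr1 mulrC divfK ?gt_eqF // /A; ring.
have B2 : ((2 ^ (n.+1 * q))%N%:R : R) <= (1 + h) ^+ p.
  rewrite natrX /p !exprM; apply: lerXn2r.
  - by rewrite nnegrE exprn_ge0.
  - by rewrite nnegrE exprn_ge0 // addr_ge0 // ltW.
  apply: le_trans (bernoulli a (ltW h0)); apply: ltW.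
  by apply: lt_le_trans ha _; rewrite lerDr.
have hp := Hp p.
have Ap : 0 < A ^+ p by rewrite exprn_gt0.
have key : ((2 ^ (n.+1 * q))%N%:R : R) * A ^+ p <= ((p.+1 ^ n)%N)%:R * (A ^+ p *+ 2).
  apply: le_trans (_ : (n.+1 ^ p)%N%:R <= _).
    by rewrite !natrX en exprMn mulrC ler_pM2l // -natrX.
  apply: le_trans hp _; rewrite ler_pM2l; last by rewrite ltr0n expn_gt0.
  have : 1 <= A ^+ p by rewrite exprn_ege1.
  lra.
have : ((2 ^ (n.+1 * q))%N%:R : R) <= (2 * (p.+1 ^ n))%N%:R.
  rewrite -(ler_pM2r Ap); apply: le_trans key _.
  rewrite le_eqVlt; apply/orP; left; apply/eqP; rewrite natrM; ring.
rewrite ler_nat leqNgt => /negP; apply; exact: nat_ineq.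
Qed.


Lemma sel0 (u : 'I_n -> R) : \sum_(j < n) (ord0 == lift ord0 j :> 'I_n.+1)%:R * u j = 0.
Proof. by apply: big1 => j _; rewrite (negbTE (neq_lift _ _)) mul0r. Qed.

Lemma sell (u : 'I_n -> R) i :
  \sum_(j < n) (lift ord0 i == lift ord0 j :> 'I_n.+1)%:R * u j = u i.
Proof.
rewrite (bigD1 i) //= eqxx mul1r big1 ?addr0 // => j hj.
by rewrite (inj_eq lift_inj) eq_sym (negbTE hj) mul0r.
Qed.

Lemma nc1ee x : nc (1 + ee x) ^+ 2 = 2 + 2 * cos (pi *+ 2 * x).
Proof.
rewrite /ee /Normc.normc /= sqr_sqrtr; last by rewrite addr_ge0 ?sqr_ge0.
have := cos2Dsin2 (pi *+ 2 * x); rewrite add0r.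
set c := cos _; set s := sin _ => h.
have -> : (1 + c) ^+ 2 + s ^+ 2 = 1 + 2 * c + (c ^+ 2 + s ^+ 2) by ring.
by rewrite h; ring.
Qed.

Lemma kron (eps : R) : 0 < eps ->
  exists t, exists z : 'I_n -> int, forall j, `|t * v j - y j - (z j)%:~R| < eps.
Proof.
move=> eps0.
case: (posnP n) => [n0 | npos].
  by exists 0, (fun _ => 0) => j; have := ltn_ord j; rewrite {2}n0.
set e := Num.min eps (1/2).
have e0 : 0 < e by rewrite lt_min eps0 /=; lra.
have e1 : e <= 1/2 by rewrite ge_min lexx orbT.
have ee' : e <= eps by rewrite ge_min lexx.
have pi0 := pi_gt0 R.
have p2 : 0 < (pi : R) *+ 2 by rewrite mulr2n; lra.
set c0 := cos (pi *+ 2 * e).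
have c0lt : c0 < 1.
  rewrite -[X in _ < X](cos0 R) /c0 ltr_cos ?in_itv /=.
  - by rewrite mulr_gt0 //; exact: p2.
  - by rewrite lexx ltW.
  - apply/andP; split; first by rewrite mulr_ge0 // ltW.
    rewrite mulr2n mulrDl; nra.
have c0ge : -1 <= c0 by exact: cos_geN1.
set eta := (1 - c0) / 2.
have eta0 : 0 < eta by rewrite /eta; lra.
have eta1 : eta <= 1 by rewrite /eta; lra.
have [t ht] := FF_big npos eta0 eta1.
exists t, (fun j => Num.floor (t * v j - y j + 1/2)) => j.
apply: lt_le_trans ee'; apply: near_int => //.
set u := fun j' => ee (t * v j' - y j').
have HF : FF t = 1 + \sum_(j' < n) u j'.
  rewrite /FF big_ord_recl /wv /yv !sel0 mulr0 subrr ee0; congr (_ + _).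
  by apply: eq_bigr => i _; rewrite !sell.
have Hs : \sum_(j' < n) u j' = u j + \sum_(j' < n | j' != j) u j'.
  by rewrite (bigD1 j).
have Hc : \sum_(j' < n | j' != j) (1 : R) = n%:R - 1.
  have : \sum_(j' < n) (1 : R) = n%:R by rewrite sumr_const card_ord.
  by rewrite (bigD1 j) //= => <-; rewrite addrC addrK.
have Hb : nc (\sum_(j' < n | j' != j) u j') <= n%:R - 1.
  rewrite -Hc; apply: le_trans; first exact: nc_sum.
  by apply: ler_sum => i _; rewrite nc_ee.
have Hn1 : (n.+1%:R : R) = n%:R + 1 by rewrite natr1.
have H1 : 2 - eta < nc (1 + u j).
  move: ht; rewrite HF Hs addrA => ht.
  have := le_normcD (1 + u j) (\sum_(j' < n | j' != j) u j').
  lra.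
have := nc1ee (t * v j - y j); rewrite -/(u j).
have := nc_ge0 (1 + u j).
set N := nc (1 + u j) => N0 HN.
have : (2 - eta) ^+ 2 < N ^+ 2.
  by rewrite ltr_pXn2r // ?nnegrE; lra.
rewrite HN => h.
have hsq : (2 - eta) ^+ 2 = 4%:R - 4%:R * eta + eta ^+ 2 by ring.
have hsq0 : 0 <= eta ^+ 2 by rewrite sqr_ge0.
have hc0 : c0 = 1 - 2 * eta by rewrite /eta; field.
rewrite -/c0; lra.
Qed.

End Bohr.
End Kron.

Section Glue.
Variables (R : realType) (n : nat).

Lemma norm2_le_sum (u : 'cV[R]_n) : norm2 u <= \sum_(i < n) `|u i 0|.
Proof.
set S := \sum_(i < n) `|u i 0|.
have S0 : 0 <= S by apply: sumr_ge0.
rewrite /norm2 /dotv -(ger0_norm S0) -sqrtr_sqr ler_sqrt ?sqr_ge0 //.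
rewrite expr2 mulr_suml; apply: ler_sum => i _.
apply: le_trans (ler_norm _) _; rewrite normrM ler_wpM2l //.
by rewrite /S (bigD1 i) //= lerDl sumr_ge0.
Qed.

Lemma coord_le_norm2 (u : 'cV[R]_n) j : `|u j 0| <= norm2 u.
Proof.
rewrite /norm2 /dotv -sqrtr_sqr ler_sqrt; last by apply: sumr_ge0 => i _; rewrite -expr2 sqr_ge0.
rewrite (bigD1 j) //= expr2 lerDl; by apply: sumr_ge0 => i _; rewrite -expr2 sqr_ge0.
Qed.

Lemma partB (M : 'M[R]_n) (g b : 'cV[R]_n) : M \in unitmx ->
  rat_indep (invmx M *m b) ->
  forall eps x, 0 < eps -> vis_well_defined eps (shifted_lattice M g) x b.
Proof.
move=> hM hri eps x eps0.
set v := invmx M *m b.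
have hv : forall q : 'I_n -> int,
    \sum_(j < n) (q j)%:~R * v j 0 = 0 -> forall j, q j = 0.
  move=> q hq j; case: (eqVneq (q j) 0) => // hj; exfalso; apply: hri.
  exists (\col_j q j); split.
    apply/negP => /eqP h0; have := congr1 (fun m : 'cV[int]_n => m j 0) h0.
    by rewrite !mxE => hh; rewrite hh eqxx in hj.
  by rewrite -[in RHS]hq; apply: eq_bigr => i _; rewrite mxE.
set yv := invmx M *m (g - x).
set C := \sum_(i < n) \sum_(j < n) `|M i j|.
have C0 : 0 <= C by do 2! (apply: sumr_ge0 => ? _).
set d := eps / (C + 1).
have d0 : 0 < d by rewrite divr_gt0 //; lra.
have [t [z hz]] := @kron R n (fun j => v j 0) (fun j => yv j 0) hv d d0.
set zc : 'cV[int]_n := \col_j z j.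
set zR := map_mx (fun m : int => m%:~R : R) zc.
set w := t *: v - yv - zR.
have hw : forall j, `|w j 0| < d.
  move=> j; have e : w j 0 = t * v j 0 - yv j 0 - (z j)%:~R by rewrite !mxE.
  by rewrite e; exact: hz.
have key : x + t *: b - (M *m zR + g) = M *m w.
  rewrite /w !mulmxBr -scalemxAr /v /yv !mulKVmx //; rewrite opprB.
  by rewrite opprD !addrA [x + _]addrC addrAC.
exists (`|t| + 1); split; first by have := normr_ge0 t; lra.
exists (x + t *: b); split.
  exists t; split; last split => //.
    by have := ler_norm t; rewrite -normrN; have := ler_norm (- t); lra.
  by have := ler_norm t; lra.
exists (M *m zR + g); split; first by exists zc.
rewrite /ball2 key; apply: le_lt_trans (norm2_le_sum _) _.
apply: (@le_lt_trans _ _ (C * d)).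
  rewrite /C mulr_suml; apply: ler_sum => i _; rewrite mxE.
  apply: le_trans; first exact: ler_norm_sum.
  rewrite mulr_suml; apply: ler_sum => j _; rewrite normrM ler_wpM2l //.
  exact: ltW.
rewrite /d mulrA ltr_pdivrMr; last lra.
nra.
Qed.


Lemma int_gap (d : int) (h : R) : h <= 1 -> `|(d%:~R : R)| < h -> d = 0.
Proof.
move=> h1 hd; apply/eqP; apply: contraT => d0.
have : (1 : R) <= `|d|%:~R by rewrite ler1z -gtz0_ge1 normr_gt0.
by rewrite intr_norm; lra.
Qed.


Section Avoid.
Variables (k : nat) (f : 'I_k -> 'cV[R]_n -> R) (c : 'I_k -> R).
Hypothesis flin : forall i u w (s : R), f i (u + s *: w) = f i u + s * f i w.

Lemma avoid_step (x0 : 'cV[R]_n) (mu0 : R) (P : pred 'I_k) (i0 : 'I_k) :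
  0 < mu0 -> (forall i, P i -> forall m : int, mu0 <= `|f i x0 - c i - m%:~R|) ->
  (exists u, f i0 u != 0) ->
  exists x, exists mu, 0 < mu /\
    forall i, P i || (i == i0) -> forall m : int, mu <= `|f i x - c i - m%:~R|.
Proof.
move=> mu00 hold [u hu].
set a := f i0 u.
set B := \sum_(i < k) `|f i u|.
have hB : forall i, `|f i u| <= B.
  by move=> i; rewrite /B (bigD1 i) //= lerDl sumr_ge0.
have B0 : 0 <= B by apply: sumr_ge0.
set m1 := Num.min mu0 1.
have m10 : 0 < m1 by rewrite lt_min mu00 ltr01.
have m1a : m1 <= mu0 by rewrite ge_min lexx.
have m1b : m1 <= 1 by rewrite ge_min lexx orbT.
set sig := m1 / ((B + 1) *+ 2).
have hBB : 0 < (B + 1) *+ 2 by rewrite mulr2n; lra.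
have sig0 : 0 < sig by rewrite divr_gt0.
have hsig : sig * (B + 1) = m1 / 2.
  rewrite /sig mulr2n; field; lra.
have hsu : forall i, sig * `|f i u| <= mu0 / 2.
  move=> i; apply: le_trans (_ : sig * (B + 1) <= _).
    by rewrite ler_pM2l //; have := hB i; lra.
  by rewrite hsig; lra.
have a0 : 0 < `|a| by rewrite normr_gt0.
set h := sig * `|a|.
have h0 : 0 < h by rewrite mulr_gt0.
have h1 : h <= 1 / 2.
  apply: le_trans (_ : sig * (B + 1) <= _).
    by rewrite ler_pM2l //; have := hB i0; lra.
  by rewrite hsig; lra.
set w0 := f i0 x0 - c i0.
have old : forall s, 0 <= s -> s <= sig -> forall i, P i -> forall m : int,
    mu0 / 2 <= `|f i (x0 + s *: u) - c i - m%:~R|.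
  move=> s s0 s1 i Pi m; rewrite flin.
  have := hold i Pi m; have := hsu i.
  have : s * `|f i u| <= sig * `|f i u| by rewrite ler_wpM2r.
  have : `|f i x0 - c i - m%:~R| <= `|f i x0 + s * f i u - c i - m%:~R| + `|s * f i u|.
    apply: le_trans (_ : `|(f i x0 + s * f i u - c i - m%:~R) + - (s * f i u)| <= _).
      by rewrite le_eqVlt; apply/orP; left; apply/eqP; congr `|_|; ring.
    by apply: le_trans (ler_normD _ _) _; rewrite normrN.
  rewrite normrM (ger0_norm s0); lra.
have newv : forall s m, f i0 (x0 + s *: u) - c i0 - m%:~R = w0 + s * a - m%:~R.
  by move=> s m; rewrite flin /w0 /a; ring.
have [s [s0 [s1 hs]]] : exists s, 0 <= s /\ s <= sig /\
    forall m : int, h / 4 <= `|w0 + s * a - m%:~R|.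
  case: (classic (forall m : int, h / 4 <= `|w0 + sig / 2 * a - m%:~R|)) => H.
    by exists (sig / 2); split; [lra | split; [lra | exact: H]].
  have [m1' hm1] := not_all_ex_not _ _ H.
  move/negP: hm1; rewrite -ltNge => hm1.
  exists sig; split; [lra | split; [lra|]] => m2.
  rewrite leNgt; apply/negP => hm2.
  set d := m2 - m1'.
  have hA : `|sig / 2 * a| = h / 2.
    by rewrite normrM (gtr0_norm (divr_gt0 sig0 (ltr0Sn _ 1))) /h; field.
  have hAD : `|sig / 2 * a - d%:~R| < h / 2.
    have -> : sig / 2 * a - d%:~R
        = (w0 + sig * a - m2%:~R) - (w0 + sig / 2 * a - m1'%:~R).
      by rewrite /d intrB; field.
    apply: le_lt_trans (ler_normB _ _) _; lra.
  have hD : `|(d%:~R : R)| < h.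
    apply: le_lt_trans (_ : `|sig / 2 * a| + `|sig / 2 * a - d%:~R| < _); last lra.
    apply: le_trans (_ : `|sig / 2 * a - (sig / 2 * a - d%:~R)| <= _).
      by rewrite opprB addrC subrK.
    exact: ler_normB.
  have hh1 : h <= 1 by lra.
  have d0 : d = 0 := int_gap hh1 hD.
  by move: hAD; rewrite d0 subr0 hA; lra.
exists (x0 + s *: u), (Num.min (mu0 / 2) (h / 4)); split.
  by rewrite lt_min; apply/andP; split; lra.
move=> i /orP [Pi | /eqP ->] m.
  by apply: le_trans (old s s0 s1 i Pi m); rewrite ge_min lexx.
by rewrite newv; apply: le_trans (hs m); rewrite ge_min lexx orbT.
Qed.

Lemma avoid : (forall i, exists u, f i u != 0) ->
  exists x, exists mu, 0 < mu /\ forall i (m : int), mu <= `|f i x - c i - m%:~R|.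
Proof.
move=> hnz.
suff: forall j, (j <= k)%N -> exists x, exists mu, 0 < mu /\
    forall i : 'I_k, (i < j)%N -> forall m : int, mu <= `|f i x - c i - m%:~R|.
  move=> /(_ k (leqnn k)) [x [mu [mu0 H]]]; exists x, mu; split => // i.
  exact: H i (ltn_ord i).
elim => [_ | j IH hj].
  by exists 0, 1; split => // i.
have [x0 [mu0 [mu00 H0]]] := IH (ltnW hj).
have [x [mu [mu0' H]]] := avoid_step (P := fun i : 'I_k => (i < j)%N)
  (i0 := Ordinal hj) mu00 H0 (hnz _).
exists x, mu; split => // i hi; apply: H.
rewrite ltnS leq_eqVlt in hi; case/orP: hi => [/eqP e | ->] //.
by apply/orP; right; apply/eqP; apply: val_inj.
Qed.

End Avoid.

Lemma mulmx00 (a : 'rV[R]_n) (u : 'cV[R]_n) : (a *m u) 0 0 = \sum_j a 0 j * u j 0.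
Proof. by rewrite mxE. Qed.

Lemma lin00 (a : 'rV[R]_n) (u w : 'cV[R]_n) (s : R) :
  (a *m (u + s *: w)) 0 0 = (a *m u) 0 0 + s * (a *m w) 0 0.
Proof.
rewrite !mulmx00 mulr_sumr -big_split; apply: eq_bigr => j _.
by rewrite !mxE /= mulrDr mulrCA.
Qed.

Lemma row_bound (a : 'rV[R]_n) (u : 'cV[R]_n) :
  `|(a *m u) 0 0| <= (\sum_j `|a 0 j|) * norm2 u.
Proof.
rewrite mulmx00 mulr_suml; apply: le_trans; first exact: ler_norm_sum.
apply: ler_sum => j _; rewrite normrM ler_wpM2l //; exact: coord_le_norm2.
Qed.

Lemma partA k (M : 'I_k -> 'M[R]_n) (hM : forall i, M i \in unitmx)
    (g : 'I_k -> 'cV[R]_n) (b : 'cV[R]_n) :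
  (forall eps x, 0 < eps ->
     vis_well_defined eps (fun x => exists i, shifted_lattice (M i) (g i) x) x b) ->
  exists i, rat_indep (invmx (M i) *m b).
Proof.
move=> H; apply: NNPP => hno.
have hdep : forall i, exists q : 'cV[int]_n, q != 0 /\
    \sum_(j < n) (q j 0)%:~R * (invmx (M i) *m b) j 0 = 0.
  by move=> i; apply: NNPP => hq; apply: hno; exists i.
pose q i := proj1_sig (constructive_indefinite_description _ (hdep i)).
have hq : forall i, q i != 0 /\
    \sum_(j < n) (q i j 0)%:~R * (invmx (M i) *m b) j 0 = 0.
  by move=> i; exact: (proj2_sig (constructive_indefinite_description _ (hdep i))).
pose qR i := map_mx (fun m : int => m%:~R : R) (q i).
pose ar i := (qR i)^T *m invmx (M i).
pose f := fun (i : 'I_k) (u : 'cV[R]_n) => (ar i *m u) 0 0.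
pose c := fun i : 'I_k => f i (g i).
have tE : forall i j, (qR i)^T 0 j = (q i j 0)%:~R by move=> i j; rewrite !mxE.
have fb : forall i, f i b = 0.
  move=> i; rewrite /f /ar -mulmxA mulmx00 -[in RHS](proj2 (hq i)).
  by apply: eq_bigr => j _; rewrite tE.
have hnz : forall i, exists u, f i u != 0.
  move=> i; exists (M i *m qR i); rewrite /f /ar mulmxA mulmxKV // mulmx00.
  apply/negP; rewrite psumr_eq0; last by move=> j _; rewrite tE !mxE -expr2 sqr_ge0.
  move=> /allP hall; case/negP: (proj1 (hq i)); apply/eqP/matrixP => j l.
  rewrite (ord1 l) mxE; have := hall j (mem_index_enum _).
  by rewrite tE mxE mulf_eq0 orbb intr_eq0 => /eqP.
have [x [mu [mu0 hx]]] := @avoid k f c (fun i u w s => lin00 _ _ _ _) hnz.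
set Cm := \sum_(i < k) \sum_j `|ar i 0 j|.
have Cm0 : 0 <= Cm by do 2! (apply: sumr_ge0 => ? _).
set eps := mu / (Cm + 1).
have eps0 : 0 < eps by rewrite divr_gt0 //; lra.
have [l [l0 [y [[lam [_ [_ ->]]] [s [[i [z ->]] hball]]]]]] := H eps x eps0.
have := hx i (\sum_j q i j 0 * z j 0).
have -> : f i x - c i - (\sum_j q i j 0 * z j 0)%:~R
    = f i (x + lam *: b - (M i *m map_mx (fun m : int => m%:~R) z + g i)).
  set V := M i *m map_mx (fun m : int => m%:~R) z.
  have fV : f i V = (\sum_j q i j 0 * z j 0)%:~R.
    rewrite /f /V /ar mulmxA mulmxKV // mulmx00 rmorph_sum /=.
    by apply: eq_bigr => j _; rewrite tE intrM mxE.
  have -> : x + lam *: b - (V + g i) = x + lam *: b + (-1) *: (V + 1 *: g i).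
    by rewrite scale1r scaleN1r.
  rewrite /f !lin00 -/(f i x) -/(f i b) -/(f i V) -/(f i (g i)) fb fV /c.
  ring.
move=> hmu.
have hb1 := row_bound (ar i) (x + lam *: b - (M i *m map_mx (fun m : int => m%:~R) z + g i)).
have hCi : \sum_j `|ar i 0 j| <= Cm.
  by rewrite /Cm (bigD1 i) //= lerDl sumr_ge0 // => ? _; exact: sumr_ge0.
have : (\sum_j `|ar i 0 j|) * norm2 (x + lam *: b - (M i *m map_mx (fun m : int => m%:~R) z + g i))
   <= Cm * eps.
  apply: le_trans (_ : (\sum_j `|ar i 0 j|) * eps <= _).
    by rewrite ler_wpM2l ?sumr_ge0 // ltW.
  by rewrite ler_wpM2r // ltW.
have : Cm * eps < mu.
  rewrite /eps mulrA ltr_pdivrMr; last lra.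
  nra.
rewrite /f in hmu; lra.
Qed.

End Glue.

Unset Implicit Arguments.

Theorem lemma2p1 (R : realType) (n k : nat) (hn : (2 <= n)%N) (hk : (1 <= k)%N)
    (M : 'I_k -> 'M[R]_n) (hM : forall i, M i \in unitmx)
    (g : 'I_k -> 'cV[R]_n) (b : 'cV[R]_n) (hb : in_sphere b) :
  let G := fun i => shifted_lattice (M i) (g i) in
  let F := fun x => exists i, G i x in
  ((forall (eps : R) (x : 'cV[R]_n), 0 < eps -> vis_well_defined eps F x b) <->
   (exists i, forall (eps : R) (x : 'cV[R]_n), 0 < eps -> vis_well_defined eps (G i) x b))
  /\
  ((exists i, forall (eps : R) (x : 'cV[R]_n), 0 < eps -> vis_well_defined eps (G i) x b) <->
   (exists i, rat_indep (invmx (M i) *m b))).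
Proof.
move=> G F.
have hC : (exists i, forall (eps : R) x, 0 < eps -> vis_well_defined eps (G i) x b) ->
    forall (eps : R) x, 0 < eps -> vis_well_defined eps F x b.
  move=> [i Hi] eps x e0; have [l [l0 [y [hy [s [hs hbl]]]]]] := Hi eps x e0.
  exists l; split => //; exists y; split => //; exists s; split => //; by exists i.
have hA : (forall (eps : R) x, 0 < eps -> vis_well_defined eps F x b) ->
    exists i, rat_indep (invmx (M i) *m b).
  by move=> H; apply: (partA hM); exact: H.
have hB : (exists i, rat_indep (invmx (M i) *m b)) ->
    exists i, forall (eps : R) x, 0 < eps -> vis_well_defined eps (G i) x b.
  by move=> [i hi]; exists i => eps x e0; apply: (partB (g i) (hM i) hi).
split; split.
- by move=> H; apply: hB; apply: hA.
- exact: hC.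
- by move=> H; apply: hA; apply: hC.
- exact: hB.
Qed.
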